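(* In a monotonous quiver, if $X$ and $Y$ are isotypic phylogenetic vertices, then any universal evolution for $X$ and any universal evolution for $Y$ are isotypic (they have the same length $m$ and, writing them as $A_0\leftarrow\cdots\leftarrow A_m=X$ and $B_0\leftarrow\cdots\leftarrow B_m=Y$, one has $A_k\sim B_k$ for all $k=0,\dots,m$).
   Context: A quiver consists of a class of vertices and, for each ordered pair of vertices $(A,B)$, a set of edges $A\to B$ (loops and multiple edges allowed). An evolution of length $m\ge 0$ is a sequence $A_0\leftarrow A_1\leftarrow\cdots\leftarrow A_m$ of vertices together with edges $A_k\to A_{k-1}$ ($1\le k\le m$); $A_0$ is its initial and $A_m$ its terminal vertex. Write $A\le B$ ($A$ is an ancestor of $B$) if there is an evolution with initial vertex $A$ and terminal vertex $B$; $A,B$ are isotypic ($A\sim B$) if $A\le B$ and $B\le A$. A vertex $A$ is primitive if every ancestor of $A$ is isotypic to $A$. A full evolution for $X$ is an evolution with primitive initial vertex and terminal vertex $X$. The height $h(X)$ is the smallest length of a full evolution for $X$ ($\infty$ if none). An evolution $\alpha=(A_0\leftarrow\cdots\leftarrow A_m)$ embeds in $\beta=(B_0\leftarrow\cdots\leftarrow B_n)$ if $m\le n$ and there are $0\le r_0<\cdots<r_m\le n$ with $A_k\sim B_{r_k}$. A universal evolution for $X$ is a full evolution for $X$ embedding in every full evolution for $X$; $X$ is phylogenetic if one exists. A quiver is monotonous if $h(A)\ge h(B)$ for every edge $A\to B$. *)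

(* Defs.v *)
From Stdlib Require Import Arith.

(* A quiver: vertices of type V, and for each ordered pair (A,B) a type
   E A B of edges A -> B (loops and multiple edges allowed). *)

(* An evolution A_0 <- A_1 <- ... <- A_m : length m, vertices vert 0..m
   (values of vert beyond m are irrelevant), and for 0 <= k < m an edge
   A_{k+1} -> A_k. *)
Record evolution (V : Type) (E : V -> V -> Type) : Type := Evolution {
  len : nat;
  vert : nat -> V;
  edge : forall k : nat, k < len -> E (vert (S k)) (vert k)
}.
Arguments len {V E} _.
Arguments vert {V E} _ _.
Arguments edge {V E} _ _ _.

Definition initial {V E} (a : @evolution V E) : V := vert a 0.
Definition terminal {V E} (a : @evolution V E) : V := vert a (len a).

Definition ancestor {V} (E : V -> V -> Type) (A B : V) : Prop :=
  exists a : evolution V E, initial a = A /\ terminal a = B.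

Definition isotypic {V} (E : V -> V -> Type) (A B : V) : Prop :=
  ancestor E A B /\ ancestor E B A.

Definition primitive {V} (E : V -> V -> Type) (A : V) : Prop :=
  forall B, ancestor E B A -> isotypic E B A.

Definition full_evolution {V} (E : V -> V -> Type) (X : V)
  (a : evolution V E) : Prop :=
  primitive E (initial a) /\ terminal a = X.

(* is_height E X n : h(X) = n (finite).  h(X) = infinity iff no n works. *)
Definition is_height {V} (E : V -> V -> Type) (X : V) (n : nat) : Prop :=
  (exists a, full_evolution E X a /\ len a = n) /\
  (forall a, full_evolution E X a -> n <= len a).

(* h(A) >= h(B) in nat extended by infinity *)
Definition height_ge {V} (E : V -> V -> Type) (A B : V) : Prop :=
  forall n, is_height E A n -> exists m, is_height E B m /\ m <= n.

Definition embeds {V} (E : V -> V -> Type) (a b : evolution V E) : Prop :=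
  len a <= len b /\
  exists r : nat -> nat,
    (forall k, k < len a -> r k < r (S k)) /\
    r (len a) <= len b /\
    (forall k, k <= len a -> isotypic E (vert a k) (vert b (r k))).

Definition universal_evolution {V} (E : V -> V -> Type) (X : V)
  (a : evolution V E) : Prop :=
  full_evolution E X a /\
  forall b, full_evolution E X b -> embeds E a b.

Definition phylogenetic {V} (E : V -> V -> Type) (X : V) : Prop :=
  exists a, universal_evolution E X a.

Definition monotonous {V} (E : V -> V -> Type) : Prop :=
  forall A B : V, E A B -> height_ge E A B.

Definition isotypic_evolutions {V} (E : V -> V -> Type)
  (a b : evolution V E) : Prop :=
  len a = len b /\ forall k, k <= len a -> isotypic E (vert a k) (vert b k).

(* Main.v *)
Require Import Defs.
From Stdlib Require Import Arith Lia.

Section S.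
Context {V : Type} {E : V -> V -> Type}.

Definition cv (a c : evolution V E) (j : nat) : V :=
  if j <=? len a then vert a j else vert c (j - len a).

Definition concat_edge (a c : evolution V E) (H : terminal a = initial c)
  (k : nat) (hk : k < len a + len c) : E (cv a c (S k)) (cv a c k).
Proof.
  unfold cv.
  destruct (le_lt_dec (S k) (len a)) as [l|l].
  - rewrite (proj2 (Nat.leb_le _ _) l), (proj2 (Nat.leb_le k (len a)) ltac:(lia)).
    exact (edge a k l).
  - rewrite (proj2 (Nat.leb_gt _ _) l).
    destruct (Nat.eq_dec k (len a)) as [e|e].
    + subst k. rewrite Nat.leb_refl.
      rewrite Nat.sub_succ_l by lia. rewrite Nat.sub_diag.
      change (vert a (len a)) with (terminal a). rewrite H.
      assert (h0 : 0 < len c) by lia. exact (edge c 0 h0).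
    + rewrite (proj2 (Nat.leb_gt k (len a)) ltac:(lia)).
      rewrite Nat.sub_succ_l by lia.
      exact (edge c (k - len a) ltac:(lia)).
Defined.

Definition concat (a c : evolution V E) (H : terminal a = initial c) : evolution V E :=
  Evolution V E (len a + len c) (cv a c) (concat_edge a c H).

Definition suffix (e : evolution V E) (k : nat) : evolution V E :=
  Evolution V E (len e - k) (fun j => vert e (j + k))
    (fun j hj => edge e (j + k) ltac:(lia)).

Definition prefix (e : evolution V E) (k : nat) (hk : k <= len e) : evolution V E :=
  Evolution V E k (vert e) (fun j hj => edge e j ltac:(lia)).

Lemma height_uniq X n m : is_height E X n -> is_height E X m -> n = m.
Proof.
  intros [[a [Ha La]] Hn] [[b [Hb Lb]] Hm].
  specialize (Hn b Hb). specialize (Hm a Ha). lia.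
Qed.

Lemma mono_chain (Hmono : monotonous E) (e : evolution V E) :
  forall k, k <= len e -> forall n, is_height E (vert e k) n ->
  exists n', is_height E (vert e 0) n' /\ n' <= n.
Proof.
  induction k; intros hk n Hn.
  - exists n; split; auto.
  - destruct (Hmono _ _ (edge e k ltac:(lia)) n Hn) as [m [Hm1 Hm2]].
    destruct (IHk ltac:(lia) m Hm1) as [n' [H1 H2]].
    exists n'; split; [auto | lia].
Qed.

Lemma anc_height (Hmono : monotonous E) A B n :
  ancestor E A B -> is_height E B n -> exists n', is_height E A n' /\ n' <= n.
Proof.
  intros [e [Hi Ht]] Hn. subst.
  apply (mono_chain Hmono e (len e)); auto.
Qed.

Lemma iso_height (Hmono : monotonous E) A B n :
  isotypic E A B -> is_height E A n -> is_height E B n.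
Proof.
  intros [HAB HBA] Hn.
  destruct (anc_height Hmono B A n HBA Hn) as [m [Hm Hmn]].
  destruct (anc_height Hmono A B m HAB Hm) as [p [Hp Hpm]].
  pose proof (height_uniq _ _ _ Hn Hp). subst.
  assert (m = p) by lia. subst; auto.
Qed.

Lemma univ_height X a : universal_evolution E X a -> is_height E X (len a).
Proof.
  intros [Hf Hu]. split.
  - exists a; auto.
  - intros b Hb. apply (proj1 (Hu b Hb)).
Qed.

Lemma min_height X a : full_evolution E X a -> is_height E X (len a) ->
  forall k, k <= len a -> is_height E (vert a k) k.
Proof.
  intros [Hp Ht] Hh k hk. split.
  - exists (prefix a k hk). split; [split|]; auto.
  - intros d [Hdp Hdt].
    destruct (le_lt_dec k (len d)) as [|Hlt]; auto. exfalso.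
    assert (Heq : terminal d = initial (suffix a k)) by (unfold terminal, initial; simpl; auto).
    pose (f := concat d (suffix a k) Heq).
    assert (Hf : full_evolution E X f).
    { split.
      - unfold initial; simpl; unfold cv. simpl. exact Hdp.
      - unfold terminal; simpl; unfold cv.
        destruct (Nat.leb_spec (len d + (len a - k)) (len d)).
        + assert (len a = k) by lia. subst k.
          transitivity (terminal d); [unfold terminal; f_equal; lia | rewrite Hdt; exact Ht].
        + rewrite <- Ht. unfold terminal, suffix. simpl vert. f_equal. lia. }
    pose proof (proj2 Hh f Hf). simpl in H. lia.
Qed.

End S.

Theorem corollary6p4 (V : Type) (E : V -> V -> Type)
  (Hmono : monotonous E) (X Y : V)
  (HX : phylogenetic E X) (HY : phylogenetic E Y) (HXY : isotypic E X Y)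
  (a b : evolution V E)
  (Ha : universal_evolution E X a) (Hb : universal_evolution E Y b) :
  isotypic_evolutions E a b.
Proof.
  pose proof (univ_height X a Ha) as HhX.
  pose proof (univ_height Y b Hb) as HhY.
  pose proof (iso_height Hmono X Y _ HXY HhX) as HhY'.
  pose proof (height_uniq _ _ _ HhY HhY') as Hlen.
  split; [lia|].
  destruct Ha as [[Hap Hat] Hau]. destruct Hb as [[Hbp Hbt] Hbu].
  pose proof HXY as [HXY1 HYX].
  destruct HYX as [c [Hci Hct]].
  assert (Heq : terminal b = initial c) by congruence.
  pose (d := concat b c Heq).
  assert (Hdf : full_evolution E X d).
  { split.
    - unfold initial; simpl; unfold cv; simpl. exact Hbp.
    - unfold terminal; simpl; unfold cv.
      destruct (Nat.leb_spec (len b + len c) (len b)).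
      + assert (H0 : len c = 0) by lia. rewrite <- Hct. unfold terminal.
        rewrite H0. change (vert c 0) with (initial c). rewrite Hci, <- Hbt.
        unfold terminal. f_equal. lia.
      + rewrite <- Hct. unfold terminal. f_equal. lia. }
  destruct (Hau d Hdf) as [_ [r [Hr1 [Hr2 Hr3]]]].
  intros k hk.
  destruct (Nat.eq_dec k (len a)) as [->|Hne].
  { fold (terminal a). rewrite <- Hlen. fold (terminal b). rewrite Hat, Hbt.
    exact HXY. }
  assert (Hak : is_height E (vert a k) k)
    by (apply (min_height X a (conj Hap Hat) HhX); lia).
  pose proof (Hr3 k hk) as Hiso.
  pose proof (iso_height Hmono _ _ _ Hiso Hak) as Hdk.
  simpl in Hdk. unfold cv in Hdk. simpl in Hiso. unfold cv in Hiso.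
  destruct (Nat.leb_spec (r k) (len b)).
  - pose proof (min_height Y b (conj Hbp Hbt) HhY (r k) H) as Hb'.
    pose proof (height_uniq _ _ _ Hdk Hb'). rewrite <- H0 in Hiso. exact Hiso.
  - exfalso.
    assert (Hmon : forall j, k + j <= len a -> r k <= r (k + j)).
    { induction j; intros; [rewrite Nat.add_0_r; lia|].
      specialize (IHj ltac:(lia)). specialize (Hr1 (k + j) ltac:(lia)).
      rewrite Nat.add_succ_r. lia. }
    specialize (Hmon (len a - k) ltac:(lia)).
    replace (k + (len a - k)) with (len a) in Hmon by lia.
    simpl in Hr2.
    assert (H0 : r k - len b <= len c) by lia.
    destruct (mono_chain Hmono c (r k - len b) H0 k Hdk) as [n' [Hn1 Hn2]].
    fold (initial c) in Hn1. rewrite Hci in Hn1.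
    pose proof (height_uniq _ _ _ Hn1 HhY). lia.
Qed.
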